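(* Let $J$ be an instance of TAP and let $a_1,a_2,\dots,a_n$ be an enumeration of all applicants (a master list of applicants) such that, for every school $s$, the preference list of $s$ is the restriction of the order $a_1,a_2,\dots,a_n$ to the applicants $a$ with $s\in S(a)$. Then $J$ admits exactly one stable matching, namely the matching $\mathcal M$ produced by the following procedure (Serial Dictatorship): start with $\mathcal M=\emptyset$; for $i=1,2,\dots,n$ in turn, if $S(a_i)$ contains a school $s$ such that $|\mathcal M_p(s)|<c_p(s)$ for both subjects $p\in\mathbf p(a_i)$, then add $(a_i,s)$ to $\mathcal M$ where $s$ is the most preferred such school on $a_i$'s preference list.
   Context: An instance of the Teachers Assignment Problem (TAP) consists of a finite set $A$ of applicants, a finite set $S$ of schools and a finite set $P$ of subjects. Each applicant $a\in A$ has a type $\mathbf p(a)=\{p_1(a),p_2(a)\}\subseteq P$ consisting of two distinct subjects, a set $S(a)\subseteq S$ of acceptable schools, and a strict linear order (her preference list) on $S(a)$. Each school $s$ has a partial capacity $c_p(s)\in\mathbb N$ for each subject $p\in P$, and a strict linear order (its preference list) on the set of applicants $a$ with $s\in S(a)$. An assignment $\mathcal M$ is a set of pairs $(a,s)$ with $s\in S(a)$ such that each applicant lies in at most one pair; write $\mathcal M(a)=s$ if $(a,s)\in\mathcal M$ and $\mathcal M(a)=\emptyset$ if $a$ is in no pair (unassigned). For a school $s$ and subjects $p,r$ let $\mathcal M_p(s)=\{a:(a,s)\in\mathcal M,\ p\in\mathbf p(a)\}$ and $\mathcal M_{p,r}(s)=\{a:(a,s)\in\mathcal M,\ \mathbf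 p(a)=\{p,r\}\}$. An assignment is a matching if $|\mathcal M_p(s)|\le c_p(s)$ for all $s\in S$, $p\in P$. School $s$ is undersubscribed in $p$ if $|\mathcal M_p(s)|<c_p(s)$. A pair $(a,s)$ with $s\in S(a)$ and $\mathbf p(a)=\{p_1,p_2\}$ blocks a matching $\mathcal M$ if ($a$ is unassigned or $a$ prefers $s$ to $\mathcal M(a)$) and at least one of: (i) $s$ is undersubscribed in both $p_1$ and $p_2$; (ii) for some $i\in\{1,2\}$, $s$ is undersubscribed in $p_i$ and $s$ prefers $a$ to some applicant in $\mathcal M_{p_{3-i}}(s)$; (iii) $s$ prefers $a$ to some applicant in $\mathcal M_{p_1,p_2}(s)$; (iv) $s$ prefers $a$ to two distinct applicants $a_1\in\mathcal M_{p_1}(s)$ and $a_2\in\mathcal M_{p_2}(s)$. A matching is stable if no pair blocks it. *)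

(* Defs.v *)
From HB Require Import structures.
From mathcomp Require Import all_boot.
Set Implicit Arguments. Unset Strict Implicit. Unset Printing Implicit Defensive.

(* An instance of the Teachers Assignment Problem.
   - type of applicant a is the two distinct subjects {sub1 a, sub2 a};
   - apl a : the preference list of a (acceptable schools S(a), most preferred first);
   - cap s p : partial capacity c_p(s);
   - spl s : preference list of school s over applicants a with s \in S(a). *)
Record TAP (Appl School Subj : finType) := MkTAP {
  sub1 : Appl -> Subj;
  sub2 : Appl -> Subj;
  apl : Appl -> seq School;
  cap : School -> Subj -> nat;
  spl : School -> seq Appl;
  sub_neq : forall a, sub1 a != sub2 a;
  apl_uniq : forall a, uniq (apl a);
  spl_uniq : forall s, uniq (spl s);
  spl_mem : forall s a, (a \in spl s) = (s \in apl a)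
}.

Section TAPDefs.
Variables (Appl School Subj : finType) (J : TAP Appl School Subj).

Definition assignment_t := {ffun Appl -> option School}.

Definition acceptable (a : Appl) (s : School) : bool := s \in apl J a.

Definition aprefers (a : Appl) (s t : School) : bool :=
  index s (apl J a) < index t (apl J a).

Definition sprefers (s : School) (a b : Appl) : bool :=
  index a (spl J s) < index b (spl J s).

Definition has_subj (a : Appl) (p : Subj) : bool :=
  (p == sub1 J a) || (p == sub2 J a).

Definition type_set (a : Appl) : {set Subj} := [set sub1 J a; sub2 J a].

Definition Mp (M : assignment_t) (s : School) (p : Subj) : {set Appl} :=
  [set b | (M b == Some s) && has_subj b p].

Definition Mtype (M : assignment_t) (s : School) (a : Appl) : {set Appl} :=
  [set b | (M b == Some s) && (type_set b == type_set a)].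

Definition is_assignment (M : assignment_t) : Prop :=
  forall a s, M a = Some s -> acceptable a s.

Definition is_matching (M : assignment_t) : Prop :=
  is_assignment M /\ forall s p, #|Mp M s p| <= cap J s p.

Definition undersub (M : assignment_t) (s : School) (p : Subj) : bool :=
  #|Mp M s p| < cap J s p.

Definition blocks (M : assignment_t) (a : Appl) (s : School) : bool :=
  let p1 := sub1 J a in let p2 := sub2 J a in
  [&& acceptable a s,
      (if M a is Some t then aprefers a s t else true) &
      [|| undersub M s p1 && undersub M s p2,
          undersub M s p1 && [exists b in Mp M s p2, sprefers s a b],
          undersub M s p2 && [exists b in Mp M s p1, sprefers s a b],
          [exists b in Mtype M s a, sprefers s a b] |
          [exists b1 in Mp M s p1, exists b2 in Mp M s p2,
             (b1 != b2) && sprefers s a b1 && sprefers s a b2]]].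

Definition stable (M : assignment_t) : Prop :=
  is_matching M /\ forall a s, ~~ blocks M a s.

Definition sd_step (M : assignment_t) (a : Appl) : assignment_t :=
  match ohead [seq s <- apl J a | undersub M s (sub1 J a) && undersub M s (sub2 J a)] with
  | Some s => [ffun b => if b == a then Some s else M b]
  | None => M
  end.

Definition serial_dictatorship (ml : seq Appl) : assignment_t :=
  foldl sd_step [ffun _ => None] ml.

End TAPDefs.

(* Main.v *)
Require Import Defs.
From HB Require Import structures.
From mathcomp Require Import all_boot.
Set Implicit Arguments. Unset Strict Implicit. Unset Printing Implicit Defensive.

Lemma idx_before (T : eqType) (P : pred T) pre post (a b : T) :
  a \notin pre -> P a -> P b -> b \in pre ->
  index b (filter P (pre ++ a :: post)) < index a (filter P (pre ++ a :: post)).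
Proof.
move=> napre Pa Pb bpre; rewrite filter_cat /= Pa !index_cat.
have -> : b \in filter P pre by rewrite mem_filter Pb.
have -> : (a \in filter P pre) = false by rewrite mem_filter (negbTE napre) andbF.
by rewrite /= eqxx addn0 index_mem mem_filter Pb bpre.
Qed.

Lemma idx_after (T : eqType) (P : pred T) pre post (a b : T) :
  a \notin pre -> b \notin pre -> b != a -> P a ->
  index a (filter P (pre ++ a :: post)) < index b (filter P (pre ++ a :: post)).
Proof.
move=> napre nbpre nba Pa; rewrite filter_cat /= Pa !index_cat.
have -> : (b \in filter P pre) = false by rewrite mem_filter (negbTE nbpre) andbF.
have -> : (a \in filter P pre) = false by rewrite mem_filter (negbTE napre) andbF.
by rewrite /= eqxx eq_sym (negbTE nba) addn0 addnS ltnS leq_addr.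
Qed.

Lemma head_filter_min (T : eqType) (P : pred T) (l : seq T) s L x :
  filter P l = s :: L -> x \in l -> P x -> index s l <= index x l.
Proof.
elim: l L => [|y l IH] L //=.
case Py: (P y) => /=.
  by move=> [<-] _ _; rewrite eqxx.
move=> H; rewrite inE => /orP[/eqP ->|xl] Px; first by rewrite Py in Px.
case: (y =P s) => // _; case: (y =P x) => [yx|_]; first by rewrite yx Px in Py.
by rewrite ltnS; apply: IH H xl Px.
Qed.

Section Main.
Variables (Appl School Subj : finType) (J : TAP Appl School Subj).

Definition e0 : assignment_t Appl School := [ffun _ => None].

Lemma sd_step_off M a b : b != a -> sd_step J M a b = M b.
Proof. by move=> nba; rewrite /sd_step; case: ohead => [s|] //; rewrite ffunE (negbTE nba). Qed.

Lemma foldl_off l M b : b \notin l -> foldl (sd_step J) M l b = M b.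
Proof.
elim: l M => [|x l IH] M //=; rewrite inE negb_or => /andP[nbx nbl].
by rewrite IH // sd_step_off.
Qed.

Lemma e0_matching : is_matching J e0.
Proof.
split; first by move=> a s; rewrite ffunE.
move=> s p; have -> : Mp J e0 s p = set0 by apply/setP => b; rewrite !inE ffunE.
by rewrite cards0.
Qed.

Lemma step_matching M a : is_matching J M -> is_matching J (sd_step J M a).
Proof.
move=> [Hass Hcap]; rewrite /sd_step.
case H: (filter _ _) => [|s L] //=.
have : s \in filter (fun t => undersub J M t (sub1 J a) && undersub J M t (sub2 J a)) (apl J a)
  by rewrite H mem_head.
rewrite mem_filter => /andP[/andP[u1 u2] sa].
split.
  move=> b t; rewrite ffunE; case: eqP => [-> [<-] // | _]; exact: Hass.
move=> t p.
case: (boolP (a \in Mp J [ffun b => if b == a then Some s else M b] t p)) => [ha|hna].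
  move: (ha); rewrite inE ffunE eqxx => /andP[/eqP [<-] hp].
  have hsub : Mp J [ffun b => if b == a then Some s else M b] s p \subset a |: Mp J M s p.
    by apply/subsetP => b; rewrite !inE ffunE; case: (b =P a).
  apply: leq_trans (subset_leq_card hsub) _.
  rewrite cardsU1; case/orP: hp => /eqP ->.
    by apply: leq_trans (leq_add (leq_b1 _) (leqnn _)) _; rewrite add1n.
  by apply: leq_trans (leq_add (leq_b1 _) (leqnn _)) _; rewrite add1n.
apply: leq_trans (Hcap t p); apply: subset_leq_card; apply/subsetP => b.
case: (b =P a) => [-> hb|nba]; first by rewrite hb in hna.
by rewrite !inE ffunE (introF eqP nba).
Qed.

Lemma foldl_matching l M : is_matching J M -> is_matching J (foldl (sd_step J) M l).
Proof. by elim: l M => [|x l IH] M //= HM; apply: IH; apply: step_matching. Qed.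


Lemma noblock_gen (M : assignment_t Appl School) a s p :
  has_subj J a p -> ~~ undersub J M s p ->
  (forall b, b \in Mp J M s p -> ~~ sprefers J s a b) -> ~~ blocks J M a s.
Proof.
move=> hp hnu hnp.
have ty : forall b, b \in Mtype J M s a -> b \in Mp J M s p.
  move=> b; rewrite !inE => /andP[-> /eqP ht] /=.
  have : p \in type_set J b by rewrite ht !inE.
  by rewrite !inE.
apply/negP => /and3P[_ _].
case/orP: hp => /eqP hp; subst p.
- rewrite (negbTE hnu) /=.
  case/or3P => [/andP[_ /existsP[b /andP[bin bp]]]| /existsP[b /andP[bin bp]] | /existsP[b1 /andP[b1in /existsP[b2 /andP[b2in /andP[/andP[_ p1] p2]]]]]].
  + by move: (hnp b bin); rewrite bp.
  + by move: (hnp b (ty b bin)); rewrite bp.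
  + by move: (hnp b1 b1in); rewrite p1.
- rewrite (negbTE hnu) andbF /=.
  case/or3P => [/andP[_ /existsP[b /andP[bin bp]]]| /existsP[b /andP[bin bp]] | /existsP[b1 /andP[b1in /existsP[b2 /andP[b2in /andP[/andP[_ p1] p2]]]]]].
  + by move: (hnp b bin); rewrite bp.
  + by move: (hnp b (ty b bin)); rewrite bp.
  + by move: (hnp b2 b2in); rewrite p2.
Qed.

Section ML.
Variables (ml : seq Appl).
Hypothesis Huniq : uniq ml.
Hypothesis Hin : forall a, a \in ml.
Hypothesis Hspl : forall s, spl J s = [seq a <- ml | s \in apl J a].

Section Decomp.
Variables (pre post : seq Appl) (a : Appl).
Hypothesis Hml : ml = pre ++ a :: post.

Local Notation F := (foldl (sd_step J) e0 ml).
Local Notation T := (foldl (sd_step J) e0 pre).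

Lemma a_notin_pre : a \notin pre.
Proof. move: Huniq; rewrite Hml cat_uniq /=. case/and4P => _ h _ _. by case/norP: h. Qed.
Lemma a_notin_post : a \notin post.
Proof. by move: Huniq; rewrite Hml cat_uniq /= => /and4P[_ _ h _]. Qed.
Lemma post_notin_pre b : b \in post -> b \notin pre.
Proof.
move: Huniq; rewrite Hml cat_uniq /= => /and4P[_ /norP[_ nh] _ _] bp.
by apply: contra nh => bpre; apply/hasP; exists b.
Qed.

Lemma D1 b : b \notin pre -> T b = None.
Proof. by move=> h; rewrite foldl_off // ffunE. Qed.

Lemma FE : F = foldl (sd_step J) (sd_step J T a) post.
Proof. by rewrite Hml foldl_cat. Qed.

Lemma D2 b : b \in pre -> F b = T b.
Proof.
move=> bpre; rewrite FE foldl_off; last first.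
  by apply: contraL bpre; apply: post_notin_pre.
rewrite sd_step_off //; apply: contraNneq a_notin_pre => <-; exact: bpre.
Qed.

Lemma D3 : F a = sd_step J T a a.
Proof. by rewrite FE foldl_off // a_notin_post. Qed.

Lemma G1 (M : assignment_t Appl School) : {in pre, forall b, M b = T b} -> forall t p, Mp J T t p \subset Mp J M t p.
Proof.
move=> Hag t p; apply/subsetP => b; rewrite !inE => /andP[/eqP Tb hp].
case: (boolP (b \in pre)) => [bpre|nbpre]; last by rewrite D1 in Tb.
by rewrite Hag // Tb eqxx.
Qed.

Lemma spref_before s b : s \in apl J a -> s \in apl J b -> b \in pre ->
  ~~ sprefers J s a b.
Proof.
move=> sa sb bpre; rewrite /sprefers Hspl Hml -leqNgt ltnW //.
exact: (idx_before (P := fun x => s \in apl J x) post a_notin_pre sa sb bpre).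
Qed.

Lemma spref_after s b : s \in apl J a -> b \notin pre -> b != a ->
  sprefers J s a b.
Proof.
move=> sa nbpre nba; rewrite /sprefers Hspl Hml.
exact: (idx_after (P := fun x => s \in apl J x) post a_notin_pre nbpre nba sa).
Qed.

Lemma F_noblock s : ~~ blocks J F a s.
Proof.
apply/negP => Hb; move: (Hb) => /and3P[acc pref _].
have [Fass Fcap] := foldl_matching ml (e0_matching).
have hag : {in pre, forall b, F b = T b} by move=> b; exact: D2.
have hsub := G1 hag.
rewrite /acceptable in acc.
have [p [hp hnu]] : exists p, has_subj J a p /\ ~~ undersub J T s p.
  case: (boolP (undersub J T s (sub1 J a))) => u1; last by exists (sub1 J a); rewrite /has_subj eqxx.
  case: (boolP (undersub J T s (sub2 J a))) => u2; last by exists (sub2 J a); rewrite /has_subj eqxx orbT.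
  exfalso; move: pref; rewrite D3 /sd_step.
  case H: (filter _ _) => [|s0 L] /=.
    have : s \in [::] by rewrite -H mem_filter u1 u2 acc.
    by [].
  rewrite ffunE eqxx /aprefers.
  have Ps : undersub J T s (sub1 J a) && undersub J T s (sub2 J a) by rewrite u1 u2.
  have := head_filter_min H acc Ps.
  by rewrite leqNgt => /negP.
have /eqP hE : Mp J T s p == Mp J F s p.
  rewrite eqEcard hsub /=; apply: leq_trans (Fcap s p) _; rewrite leqNgt; exact: hnu.
have hnp : forall b, b \in Mp J F s p -> ~~ sprefers J s a b.
  move=> b; rewrite -hE inE => /andP[/eqP Tb _].
  have bpre : b \in pre by apply: contraT => nb; rewrite D1 in Tb.
  apply: spref_before => //.
  have : F b = Some s by rewrite D2.
  by move/Fass.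
have hnuF : ~~ undersub J F s p by rewrite /undersub -hE.
by move: Hb; apply/negP; apply: noblock_gen hp hnuF hnp.
Qed.

Lemma key_step (M : assignment_t Appl School) :
  stable J M -> {in pre, forall b, M b = F b} -> M a = F a.
Proof.
move=> [[Mass Mcap] Mnb] Hag.
have hagT : {in pre, forall b, M b = T b} by move=> b bp; rewrite Hag // D2.
have hsub := G1 hagT.
have TaN : T a = None by apply: D1 a_notin_pre.
have hs1 : has_subj J a (sub1 J a) by rewrite /has_subj eqxx.
have hs2 : has_subj J a (sub2 J a) by rewrite /has_subj eqxx orbT.
have over : forall t p, M a = Some t -> has_subj J a p -> undersub J T t p.
  move=> t p Ma hp; rewrite /undersub.
  have h1 : a |: Mp J T t p \subset Mp J M t p.
    by rewrite subUset sub1set inE Ma eqxx hp hsub.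
  have := leq_trans (subset_leq_card h1) (Mcap t p).
  by rewrite cardsU1 inE TaN /= add1n.
have new : forall t p b, b \in Mp J M t p -> b \notin Mp J T t p -> b \notin pre.
  move=> t p b bin; apply: contra => bpre; move: bin; by rewrite !inE (hagT b bpre).
have later : forall t p, t \in apl J a -> M a != Some t -> undersub J T t p ->
    ~~ undersub J M t p -> exists2 b, b \in Mp J M t p & sprefers J t a b.
  move=> t p ta nMa uT nuM.
  have : ~~ (Mp J M t p \subset Mp J T t p).
    apply: contra nuM => hs; rewrite /undersub; exact: leq_ltn_trans (subset_leq_card hs) uT.
  case/subsetPn => b bin bnot; exists b => //.
  apply: spref_after => //; first exact: new bin bnot.
  apply: contraNneq nMa => eba; by move: bin; rewrite -eba inE => /andP[].
have blk : forall s, s \in apl J a -> undersub J T s (sub1 J a) ->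
    undersub J T s (sub2 J a) -> M a != Some s ->
    (if M a is Some t then aprefers J a s t else true) -> False.
  move=> s sa u1 u2 nMa pref; apply: (negP (Mnb a s)); rewrite /blocks /=.
  apply/and3P; split; [exact: sa | exact: pref | ].
  case: (boolP (undersub J M s (sub1 J a))) => v1;
    case: (boolP (undersub J M s (sub2 J a))) => v2.
  + by [].
  + have [b bin bp] := later _ _ sa nMa u2 v2.
    apply/orP; right; apply/orP; left; rewrite /=.
    by apply/existsP; exists b; rewrite bin bp.
  + have [b bin bp] := later _ _ sa nMa u1 v1.
    apply/orP; right; apply/orP; right; apply/orP; left; rewrite /=.
    by apply/existsP; exists b; rewrite bin bp.
  + have [b1 b1in b1p] := later _ _ sa nMa u1 v1.
    have [b2 b2in b2p] := later _ _ sa nMa u2 v2.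
    case: (b1 =P b2) => [eb|nb].
    * subst b2; apply/orP; right; apply/orP; right; apply/orP; right; apply/orP; left.
      apply/existsP; exists b1; rewrite b1p andbT inE.
      move: b1in b2in; rewrite !inE => /andP[-> h1] /andP[_ h2] /=.
      apply/eqP/setP => x; rewrite !inE.
      case/orP: h1 => /eqP e1; case/orP: h2 => /eqP e2.
      - by move: (sub_neq J a); rewrite e1 e2 eqxx.
      - by rewrite e1 e2.
      - by rewrite e1 e2 orbC.
      - by move: (sub_neq J a); rewrite e1 e2 eqxx.
    * apply/orP; right; apply/orP; right; apply/orP; right; apply/orP; right.
      apply/existsP; exists b1; rewrite b1in /=; apply/existsP; exists b2.
      by rewrite b2in b1p b2p !andbT; apply/eqP.
rewrite D3 /sd_step.
case H: (filter _ _) => [|s L] /=.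
  rewrite TaN; case Ma: (M a) => [t|] //; exfalso.
  have ta : t \in apl J a by exact: (Mass a t Ma).
  have : t \in [::] by rewrite -H mem_filter ta (over t _ Ma hs1) (over t _ Ma hs2).
  by [].
rewrite ffunE eqxx.
have : s \in filter (fun t => undersub J T t (sub1 J a) && undersub J T t (sub2 J a)) (apl J a)
  by rewrite H mem_head.
rewrite mem_filter => /andP[/andP[u1 u2] sa].
case Ma: (M a) => [t|].
  case: (t =P s) => [-> //|nts].
  have ta : t \in apl J a by exact: (Mass a t Ma).
  case: (ltngtP (index t (apl J a)) (index s (apl J a))) => hi.
  - exfalso.
    have Pt : undersub J T t (sub1 J a) && undersub J T t (sub2 J a)
      by rewrite (over t _ Ma hs1) (over t _ Ma hs2).
    have := head_filter_min H ta Pt.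
    by rewrite leqNgt hi.
  - exfalso; apply: (blk s sa u1 u2); rewrite Ma //.
    by apply/eqP => -[e]; apply: nts.
  - exfalso; apply: nts.
    by have := congr1 (nth t (apl J a)) hi; rewrite !nth_index.
exfalso; apply: (blk s sa u1 u2); by rewrite Ma.
Qed.

End Decomp.

Lemma decomp a : exists pre post, ml = pre ++ a :: post.
Proof.
exists (take (index a ml) ml), (drop (index a ml).+1 ml).
by rewrite -[LHS](cat_take_drop (index a ml)) (drop_nth a) ?index_mem ?nth_index.
Qed.

Lemma sd_stable : stable J (foldl (sd_step J) e0 ml).
Proof.
split; first exact: foldl_matching e0_matching.
move=> a s; have [pre [post Hml]] := decomp a.
exact: F_noblock Hml s.
Qed.

Lemma sd_unique M : stable J M -> M = foldl (sd_step J) e0 ml.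
Proof.
move=> stM.
have agree : forall pre post, ml = pre ++ post ->
    {in pre, forall b, M b = foldl (sd_step J) e0 ml b}.
  elim/last_ind => [|pre a IH] post Hml b; first by [].
  rewrite -cats1 -catA cat1s in Hml.
  rewrite mem_rcons inE => /orP[/eqP ->|bpre].
    exact: key_step Hml M stM (IH _ Hml).
  exact: IH _ Hml _ bpre.
apply/ffunP => b; apply: (agree ml [::]); [by rewrite cats0 | exact: Hin].
Qed.

End ML.
End Main.

Theorem theorem2 (Appl School Subj : finType) (J : TAP Appl School Subj)
    (ml : seq Appl) :
  uniq ml -> (forall a, a \in ml) ->
  (forall s, spl J s = [seq a <- ml | s \in apl J a]) ->
  stable J (serial_dictatorship J ml) /\
  (forall M, stable J M -> M = serial_dictatorship J ml).
Proof.
move=> Hu Hi Hs; split; first exact: sd_stable Hu Hi Hs.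
move=> M stM; exact: (@sd_unique _ _ _ J ml Hu Hi Hs M stM).
Qed.
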